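(* For any $n\in\mathbb{N}$ there exists $x\in I$ such that $n\,\tilde{\mid}\,x$.
   Context: $\mathbb{N}=\{1,2,3,\dots\}$; $\beta\mathbb{N}$ is the set of ultrafilters on $\mathbb{N}$, with each $n\in\mathbb{N}$ identified with the principal ultrafilter at $n$. For $A\subseteq\mathbb{N}$, $\overline{A}=\{x\in\beta\mathbb{N}:A\in x\}$. $P$ is the set of primes, $L_0=\{1\}$, $L_k=\{a_1\cdots a_k:a_i\in P\}$. $I=\bigcap_{i=0}^\infty\overline{\mathbb{N}\setminus L_i}$ (ultrafilters containing none of the $L_i$). For $x,y\in\beta\mathbb{N}$, $x\,\tilde{\mid}\,y$ iff for every $A\in x$ the set $\{k\in\mathbb{N}:\exists a\in A,\ a\mid k\}$ belongs to $y$. *)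

(* Defs.v *)
From mathcomp Require Import all_boot.
Set Implicit Arguments. Unset Strict Implicit. Unset Printing Implicit Defensive.

(* Subsets of nat, as predicates. N = {1,2,...} is the set of positive nats. *)
Definition natset := nat -> Prop.
Definition Npos : natset := fun n => 0 < n.

(* An element of beta N: an ultrafilter on N = {n | 0 < n}, represented as a
   family of subsets of nat containing Npos. *)
Record is_ultrafilter (x : natset -> Prop) : Prop := {
  uf_N     : x Npos;
  uf_empty : ~ x (fun _ => False);
  uf_inter : forall A B, x A -> x B -> x (fun n => A n /\ B n);
  uf_up    : forall A B, x A -> (forall n, A n -> B n) -> x B;
  uf_ultra : forall A, x A \/ x (fun n => Npos n /\ ~ A n) }.

(* The principal ultrafilter at n (identification of n with an element of beta N). *)
Definition principal (n : nat) : natset -> Prop := fun A => A n.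

(* L_k = products of exactly k primes (with repetition); L_0 = {1}. *)
Definition L (k : nat) : natset :=
  fun m => exists s : seq nat, size s = k /\ all prime s /\ m = \prod_(p <- s) p.

(* x \in closure(A)  iff  A \in x. *)
Definition in_closure (A : natset) (x : natset -> Prop) : Prop := x A.

(* I = intersection over i of closure(N \ L_i). *)
Definition inI (x : natset -> Prop) : Prop :=
  forall i : nat, in_closure (fun m => Npos m /\ ~ L i m) x.

Definition tdiv (x y : natset -> Prop) : Prop :=
  forall A, x A -> y (fun k => Npos k /\ exists a, A a /\ Npos a /\ (a %| k)).

(* Main.v *)
Require Import Defs.
From mathcomp Require Import all_boot.
From mathcomp Require Import boolp classical_sets filter.
From Stdlib Require Import Lia.
From mathcomp Require Import zify.


Lemma logn2_prod (s : seq nat) : all prime s -> 0 < \prod_(p <- s) p /\ logn 2 (\prod_(p <- s) p) <= size s.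
Proof.
elim: s => [|p s IH] /=; first by rewrite big_nil.
move=> /andP [pp ps]; have [h1 h2] := IH ps.
have p0 : 0 < p by apply: prime_gt0.
rewrite big_cons lognM // logn_prime //; split; first by rewrite muln_gt0 p0.
by case: (2 == p) => /=; lia.
Qed.

Lemma notL {i m} : L i m -> 0 < m -> 2 ^ i.+1 %| m -> False.
Proof.
move=> [s [hs [hp ->]]] m0.
rewrite pfactor_dvdn //; have [_ h] := @logn2_prod s hp; rewrite hs in h; lia.
Qed.

Theorem corollary3p8 (n : nat) (hn : 0 < n) :
  exists x : natset -> Prop, is_ultrafilter x /\ inI x /\ tdiv (principal n) x.
Proof.
pose D k m := 0 < m /\ n * 2 ^ k %| m.
pose F : set_system nat := fun B => exists k, forall m, D k m -> B m.
have FF : ProperFilter F.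
  split.
    move=> [k hk]; apply: (hk (n * 2 ^ k)); split => //.
    by rewrite muln_gt0 hn expn_gt0.
  split.
  - by exists 0.
  - move=> A B [k1 h1] [k2 h2]; exists (maxn k1 k2) => m [m0 hm]; split.
      apply: h1; split => //; apply: dvdn_trans hm; apply: dvdn_mul => //.
      by apply: dvdn_exp2l; rewrite leq_maxl.
    apply: h2; split => //; apply: dvdn_trans hm; apply: dvdn_mul => //.
    by apply: dvdn_exp2l; rewrite leq_maxr.
  - by move=> P Q PQ [k hk]; exists k => m /hk /PQ.
have [G [GU FG]] := ultraFilterLemma FF.
have GS : forall A B : set nat, G A -> (forall m, A m -> B m) -> G B.
  by move=> A B GA AB; apply: filterS GA.
have GN : G Npos by apply: FG; exists 0 => m [].
exists G; split; [split|split].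
- exact: GN.
- move=> h; apply: (filter_not_empty G); exact: (GS _ _ h).
- by move=> A B GA GB; apply: (filterI GA GB).
- exact: GS.
- move=> A; case: (in_ultra_setVsetC A GU) => h; [by left|right].
  apply: (GS _ _ (filterI GN h)) => m [] //.
- move=> i; apply: FG; exists i.+1 => m [m0 hm]; split => //.
  move=> Li; exact: (notL Li m0 (dvdn_trans (dvdn_mull n (dvdnn _)) hm)).
- move=> A An; apply: FG; exists 0 => m [m0 hm]; split => //.
  exists n; split => //; split => //; apply: dvdn_trans hm; exact: dvdn_mulr.
Qed.
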